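(* Let $g:[0,\infty)\to[0,\infty)$ be a strictly increasing $C^1$ function with $g(0)=0$. Assume there is $a_*>0$ such that $c_0:=\min_{[0,a_*]}g'>0$ and $g$ restricted to $[a_*,\infty)$ is convex. Let $c_1=\max_{[0,a_*]}g'$ and $\gamma=c_1/c_0$. Then $$g(x)+g(y)\le g(x+\gamma y)\quad\text{for all }x,y\in[0,\infty).$$ *)

(* Defs.v *)
From Stdlib Require Import Reals.
Open Scope R_scope.

Definition right_deriv (g : R -> R) (x l : R) : Prop :=
  forall eps : R, 0 < eps -> exists delta : R, 0 < delta /\
    forall h : R, 0 < h < delta -> Rabs ((g (x + h) - g x) / h - l) < eps.

Definition is_deriv_on_nonneg (g g' : R -> R) : Prop :=
  right_deriv g 0 (g' 0) /\ forall x : R, 0 < x -> derivable_pt_lim g x (g' x).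

Definition continuous_on_nonneg (f : R -> R) : Prop :=
  forall x : R, 0 <= x -> forall eps : R, 0 < eps -> exists delta : R, 0 < delta /\
    forall y : R, 0 <= y -> Rabs (y - x) < delta -> Rabs (f y - f x) < eps.

Definition C1_nonneg (g g' : R -> R) : Prop :=
  is_deriv_on_nonneg g g' /\ continuous_on_nonneg g'.

Definition is_min_on (f : R -> R) (a b m : R) : Prop :=
  (exists t, a <= t <= b /\ f t = m) /\ (forall t, a <= t <= b -> m <= f t).
Definition is_max_on (f : R -> R) (a b m : R) : Prop :=
  (exists t, a <= t <= b /\ f t = m) /\ (forall t, a <= t <= b -> f t <= m).

Definition convex_on_from (f : R -> R) (a : R) : Prop :=
  forall x y t : R, a <= x -> a <= y -> 0 <= t <= 1 ->
    f (t * x + (1 - t) * y) <= t * f x + (1 - t) * f y.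

(* Main.v *)
Require Import Defs.
From Stdlib Require Import Reals Lra.
Open Scope R_scope.

Lemma lin_deriv (x k c : R) : derivable_pt_lim (fun y => x + k * y) c k.
Proof.
  intros eps Heps. exists (mkposreal 1 Rlt_0_1). intros h Hh _.
  replace ((x + k * (c + h) - (x + k * c)) / h - k) with 0 by (field; auto).
  rewrite Rabs_R0; lra.
Qed.

Lemma deriv_le_slope (g : R -> R) (p l S d : R) :
  derivable_pt_lim g p l -> 0 < d ->
  (forall h, 0 < h <= d -> (g (p + h) - g p) / h <= S) -> l <= S.
Proof.
  intros Hd Hdpos HS. destruct (Rle_or_lt l S) as [H|H]; auto.
  destruct (Hd (l - S)) as [del Hdel]; [lra|].
  set (h := Rmin (del / 2) d).
  assert (Hh0 : 0 < h) by (unfold h; apply Rmin_pos; [destruct del; simpl; lra|lra]).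
  assert (Hh1 : h <= d) by apply Rmin_r.
  assert (Hh2 : h <= del / 2) by apply Rmin_l.
  assert (Hdl : 0 < del) by (destruct del; simpl; lra).
  specialize (Hdel h ltac:(lra) ltac:(rewrite Rabs_right; lra)).
  specialize (HS h ltac:(lra)).
  revert Hdel; unfold Rabs; destruct Rcase_abs; lra.
Qed.

Lemma slope_le_deriv (g : R -> R) (q l S d : R) :
  derivable_pt_lim g q l -> 0 < d ->
  (forall h, 0 < h <= d -> S <= (g q - g (q - h)) / h) -> S <= l.
Proof.
  intros Hd Hdpos HS. destruct (Rle_or_lt S l) as [H|H]; auto.
  destruct (Hd (S - l)) as [del Hdel]; [lra|].
  set (h := Rmin (del / 2) d).
  assert (Hh0 : 0 < h) by (unfold h; apply Rmin_pos; [destruct del; simpl; lra|lra]).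
  assert (Hh1 : h <= d) by apply Rmin_r.
  assert (Hh2 : h <= del / 2) by apply Rmin_l.
  assert (Hdl : 0 < del) by (destruct del; simpl; lra).
  specialize (Hdel (- h) ltac:(lra) ltac:(rewrite Rabs_Ropp, Rabs_right; lra)).
  specialize (HS h ltac:(lra)).
  replace ((g (q + - h) - g q) / - h) with ((g q - g (q - h)) / h) in Hdel
    by (replace (q + - h) with (q - h) by ring; field; lra).
  revert Hdel; unfold Rabs; destruct Rcase_abs; lra.
Qed.

Lemma convex_slope1 (g : R -> R) (a p q h : R) :
  convex_on_from g a -> a <= p -> p < q -> 0 < h <= q - p ->
  (g (p + h) - g p) / h <= (g q - g p) / (q - p).
Proof.
  intros Hc Hp Hpq Hh.
  set (t := h / (q - p)).
  assert (Ht : 0 <= t <= 1).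
  { unfold t; split. apply Rmult_le_pos; [lra|]; left; apply Rinv_0_lt_compat; lra.
    apply Rmult_le_reg_r with (q - p); [lra|]. unfold Rdiv; rewrite Rmult_assoc, Rinv_l; lra. }
  specialize (Hc q p t ltac:(lra) Hp Ht).
  replace (t * q + (1 - t) * p) with (p + h) in Hc by (unfold t; field; lra).
  assert (g (p + h) - g p <= t * (g q - g p)) by lra.
  unfold t in H.
  apply Rmult_le_reg_r with h; [lra|].
  replace ((g (p + h) - g p) / h * h) with (g (p + h) - g p) by (field; lra).
  replace ((g q - g p) / (q - p) * h) with (h / (q - p) * (g q - g p)) by (field; lra).
  exact H.
Qed.

Lemma convex_slope2 (g : R -> R) (a p q h : R) :
  convex_on_from g a -> a <= p -> p < q -> 0 < h <= q - p ->
  (g q - g p) / (q - p) <= (g q - g (q - h)) / h.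
Proof.
  intros Hc Hp Hpq Hh.
  set (t := h / (q - p)).
  assert (Ht : 0 <= t <= 1).
  { unfold t; split. apply Rmult_le_pos; [lra|]; left; apply Rinv_0_lt_compat; lra.
    apply Rmult_le_reg_r with (q - p); [lra|]. unfold Rdiv; rewrite Rmult_assoc, Rinv_l; lra. }
  specialize (Hc p q t Hp ltac:(lra) Ht).
  replace (t * p + (1 - t) * q) with (q - h) in Hc by (unfold t; field; lra).
  assert (t * (g q - g p) <= g q - g (q - h)) by lra.
  unfold t in H.
  apply Rmult_le_reg_r with h; [lra|].
  replace ((g q - g (q - h)) / h * h) with (g q - g (q - h)) by (field; lra).
  replace ((g q - g p) / (q - p) * h) with (h / (q - p) * (g q - g p)) by (field; lra).
  exact H.
Qed.

Lemma deriv_mono (g g' : R -> R) (a p q : R) :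
  convex_on_from g a -> 0 < a -> a <= p -> p <= q ->
  (forall x, 0 < x -> derivable_pt_lim g x (g' x)) -> g' p <= g' q.
Proof.
  intros Hc Ha Hp Hpq Hd. destruct (Req_dec p q) as [E|E]; [subst; lra|].
  apply Rle_trans with ((g q - g p) / (q - p)).
  - apply (deriv_le_slope g p _ _ (q - p)); [apply Hd; lra|lra|].
    intros h Hh; apply (convex_slope1 g a); auto; lra.
  - apply (slope_le_deriv g q _ _ (q - p)); [apply Hd; lra|lra|].
    intros h Hh; apply (convex_slope2 g a); auto; lra.
Qed.

Theorem lemma5p3 (g g' : R -> R) (a_star c0 c1 : R)
  (Hrange : forall x : R, 0 <= x -> 0 <= g x)
  (Hincr : forall x y : R, 0 <= x -> x < y -> g x < g y)
  (HC1 : C1_nonneg g g')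
  (Hg0 : g 0 = 0)
  (Ha : 0 < a_star)
  (Hc0 : is_min_on g' 0 a_star c0)
  (Hc0pos : 0 < c0)
  (Hconv : convex_on_from g a_star)
  (Hc1 : is_max_on g' 0 a_star c1) :
  forall x y : R, 0 <= x -> 0 <= y -> g x + g y <= g (x + (c1 / c0) * y).
Proof.
  destruct HC1 as [[Hr0 Hd] _].
  destruct Hc0 as [_ Hmin]. destruct Hc1 as [_ Hmax].
  set (k := c1 / c0).
  assert (Hc01 : c0 <= c1).
  { apply Rle_trans with (g' 0); [apply Hmin|apply Hmax]; lra. }
  assert (Hk1 : 1 <= k).
  { unfold k. apply Rmult_le_reg_r with c0; [lra|].
    replace (c1 / c0 * c0) with c1 by (field; lra). lra. }
  assert (Hkc0 : k * c0 = c1) by (unfold k; field; lra).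
  assert (Hge : forall z, 0 <= z -> c0 <= g' z).
  { intros z Hz. destruct (Rle_or_lt z a_star).
    - apply Hmin; lra.
    - apply Rle_trans with (g' a_star); [apply Hmin; lra|].
      apply (deriv_mono g g' a_star); auto; lra. }
  intros x y Hx Hy.
  destruct (Req_dec y 0) as [Ey|Ey].
  { subst y. rewrite Rmult_0_r, Rplus_0_r, Hg0; lra. }
  set (H := fun z => g (x + k * z) - g z - g x).
  assert (Hmono : forall s, 0 < s < y -> H s <= H y).
  { intros s Hs.
    set (lin := fun z => x + k * z).
    set (F := (comp g lin - g - fct_cte (g x))%F).
    set (F' := fun c => g' (x + k * c) * k - g' c - 0).
    destruct (MVT_cor2 F F' s y ltac:(lra)) as [c [Hc Hcr]].
    { intros c Hcc. unfold F, F'.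
      apply derivable_pt_lim_minus; [|apply derivable_pt_lim_const].
      apply derivable_pt_lim_minus; [|apply Hd; lra].
      apply derivable_pt_lim_comp; [apply lin_deriv|apply Hd; unfold lin; nra]. }
    assert (HF : forall z, F z = H z) by (intros; reflexivity).
    rewrite !HF in Hc.
    assert (0 <= F' c).
    { unfold F'. destruct (Rle_or_lt c a_star).
      - assert (g' c <= c1) by (apply Hmax; lra).
        assert (c0 <= g' (x + k * c)) by (apply Hge; nra). nra.
      - assert (g' c <= g' (x + k * c)) by (apply (deriv_mono g g' a_star); auto; nra).
        assert (c0 <= g' (x + k * c)) by (apply Hge; nra). nra. }
    assert (0 <= F' c * (y - s)) by (apply Rmult_le_pos; lra). rewrite (HF s) in Hc. lra. }
  destruct (Rle_or_lt 0 (H y)) as [Hpos|Hneg].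
  { unfold H in Hpos. lra. }
  exfalso.
  destruct (Hr0 1 Rlt_0_1) as [del [Hdel Hq]].
  set (L := Rabs (g' 0) + 1).
  assert (HL : 0 < L) by (unfold L; pose proof (Rabs_pos (g' 0)); lra).
  set (e := - H y).
  assert (He : 0 < e) by (unfold e; lra).
  set (s := Rmin (y / 2) (Rmin (del / 2) (e / (2 * L)))).
  assert (Hs1 : s <= y / 2) by apply Rmin_l.
  assert (Hs2 : s <= del / 2) by (apply Rle_trans with (Rmin (del / 2) (e / (2 * L))); [apply Rmin_r|apply Rmin_l]).
  assert (Hs3 : s <= e / (2 * L)) by (apply Rle_trans with (Rmin (del / 2) (e / (2 * L))); apply Rmin_r).
  assert (Hs0 : 0 < s).
  { unfold s. apply Rmin_pos; [lra|]. apply Rmin_pos; [lra|].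
    apply Rdiv_lt_0_compat; lra. }
  specialize (Hq s ltac:(lra)).
  rewrite Rplus_0_l, Hg0, Rminus_0_r in Hq.
  assert (Hgs : g s < L * s).
  { assert (Hq' : g s / s < L).
    { unfold L. pose proof (Rabs_triang (g s / s - g' 0) (g' 0)).
      replace (g s / s - g' 0 + g' 0) with (g s / s) in H0 by ring.
      pose proof (Rle_abs (g s / s)). lra. }
    replace (g s) with (g s / s * s) by (field; lra). nra. }
  assert (Hes : L * s <= e / 2).
  { apply Rle_trans with (L * (e / (2 * L))). nra.
    right; field; lra. }
  assert (Hgx : g x <= g (x + k * s)).
  { left; apply Hincr; nra. }
  specialize (Hmono s ltac:(lra)).
  assert (E1 : H s = g (x + k * s) - g s - g x) by reflexivity.
  assert (E2 : H y = - e) by (unfold e; ring). lra.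
Qed.
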